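(* Let $\mathcal{H}_A,\mathcal{H}_B,\mathcal{H}_C$ be finite-dimensional complex Hilbert spaces and let $U=\sum_{j=1}^r Q_j\otimes R_j$ be a matrix on $\mathcal{H}_A\otimes\mathcal{H}_B\otimes\mathcal{H}_C$, where $Q_1,\dots,Q_r$ are linearly independent matrices on $\mathcal{H}_A\otimes\mathcal{H}_B$ and $R_1,\dots,R_r$ are linearly independent matrices on $\mathcal{H}_C$. Suppose that $Q_1,\dots,Q_n$ ($n\le r$) are product matrices, i.e. $Q_j=X_j'\otimes Y_j'$ for some matrices $X_j'$ on $\mathcal{H}_A$ and $Y_j'$ on $\mathcal{H}_B$. Then there exists a decomposition $U=\sum_{i=1}^{\mathrm{sr}(U)}X_i\otimes Y_i\otimes Z_i$ with exactly $\mathrm{sr}(U)$ terms such that $X_j\otimes Y_j=Q_j$ for $j=1,\dots,n$.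
   Context: For a matrix $U$ on a tensor product $\mathcal{H}_1\otimes\cdots\otimes\mathcal{H}_m$ of finite-dimensional complex Hilbert spaces, its Schmidt rank $\mathrm{sr}(U)$ is the least integer $r$ such that $U=\sum_{j=1}^r A_{j,1}\otimes\cdots\otimes A_{j,m}$ with each $A_{j,i}$ a matrix on $\mathcal{H}_i$ (i.e. the tensor rank of $U$). *)

(* Defs.v *)
From HB Require Import structures.
From mathcomp Require Import all_boot all_order all_algebra.
From mathcomp Require Import complex mxtens.
From mathcomp Require Import reals.
Set Implicit Arguments. Unset Strict Implicit. Unset Printing Implicit Defensive.
Import GRing.Theory.
Local Open Scope ring_scope.

(* The complex numbers are modelled as R[i] for R : realType
   (any realType is a complete archimedean ordered field, i.e. the reals). *)

(* The tensor product of matrices is mathcomp-real-closed's Kronecker product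
   [tensmx] (written *t), grouped as (X *t Y) *t Z. *)
Definition has_decomp3 (K : pzRingType) (a b c : nat) (U : 'M[K]_(a * b * c)) (s : nat) :=
  exists (X : nat -> 'M[K]_a) (Y : nat -> 'M[K]_b) (Z : nat -> 'M[K]_c),
    U = \sum_(i < s) tensmx (tensmx (X i) (Y i)) (Z i).

Definition is_schmidt_rank3 (K : pzRingType) (a b c : nat) (U : 'M[K]_(a * b * c)) (s : nat) :=
  has_decomp3 U s /\ forall t, has_decomp3 U t -> (s <= t)%N.

(* Main.v *)
Require Import Defs.
From Stdlib Require Classical_Prop.
From HB Require Import structures.
From mathcomp Require Import all_boot all_order all_algebra.
From mathcomp Require Import complex mxtens.
Import GRing.Theory.
Local Open Scope ring_scope.
From mathcomp Require Import reals.
Set Implicit Arguments. Unset Strict Implicit. Unset Printing Implicit Defensive.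
Section Aux.
Variable F : fieldType.

Lemma tensmxDl m n p q (A B : 'M[F]_(m,n)) (C : 'M[F]_(p,q)) :
  tensmx (A + B) C = tensmx A C + tensmx B C.
Proof. by apply/matrixP=> i j; rewrite !mxE mulrDl. Qed.

Lemma tensmxDr m n p q (A : 'M[F]_(m,n)) (B C : 'M[F]_(p,q)) :
  tensmx A (B + C) = tensmx A B + tensmx A C.
Proof. by apply/matrixP=> i j; rewrite !mxE mulrDr. Qed.

Lemma tensmxZl m n p q k (A : 'M[F]_(m,n)) (C : 'M[F]_(p,q)) :
  tensmx (k *: A) C = k *: tensmx A C.
Proof. by apply/matrixP=> i j; rewrite !mxE mulrA. Qed.

Lemma tensmxZr m n p q k (A : 'M[F]_(m,n)) (C : 'M[F]_(p,q)) :
  tensmx A (k *: C) = k *: tensmx A C.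
Proof. by apply/matrixP=> i j; rewrite !mxE mulrCA. Qed.

Lemma tensmx_suml m n p q (I : Type) (r : seq I) (P : pred I)
   (G : I -> 'M[F]_(m,n)) (C : 'M[F]_(p,q)) :
  tensmx (\sum_(i <- r | P i) G i) C = \sum_(i <- r | P i) tensmx (G i) C.
Proof.
by apply: (big_morph (fun A => tensmx A C)) => [A B|]; rewrite ?tensmxDl ?tens0mx.
Qed.

Lemma tensmx_sumr m n p q (I : Type) (r : seq I) (P : pred I)
   (G : I -> 'M[F]_(p,q)) (A : 'M[F]_(m,n)) :
  tensmx A (\sum_(i <- r | P i) G i) = \sum_(i <- r | P i) tensmx A (G i).
Proof.
by apply: (big_morph (fun C => tensmx A C)) => [B C|]; rewrite ?tensmxDr ?tensmx0.
Qed.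

Lemma delta_tens m n p q (i : 'I_m) (j : 'I_n) (k : 'I_p) (l : 'I_q) :
  delta_mx (mxtens_index (i, k)) (mxtens_index (j, l)) =
  tensmx (delta_mx i j : 'M[F]_(m,n)) (delta_mx k l : 'M[F]_(p,q)).
Proof.
apply/matrixP=> x y.
case: (mxtens_indexP x) => x1 x2; case: (mxtens_indexP y) => y1 y2.
rewrite tensmxE !mxE !(inj_eq (can_inj (@mxtens_indexK _ _))) !xpair_eqE.
by case: (_ == _); case: (_ == _); case: (_ == _); case: (_ == _); rewrite ?mulr1 ?mulr0 ?mul0r.
Qed.

Lemma decomp0 a b c : has_decomp3 (0 : 'M[F]_(a*b*c)) 0.
Proof. by exists (fun _ => 0), (fun _ => 0), (fun _ => 0); rewrite big_ord0. Qed.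

Lemma decomp1 a b c (X : 'M[F]_a) (Y : 'M[F]_b) (Z : 'M[F]_c) :
  has_decomp3 (tensmx (tensmx X Y) Z) 1.
Proof. by exists (fun _ => X), (fun _ => Y), (fun _ => Z); rewrite big_ord1. Qed.

Lemma decompD a b c (U V : 'M[F]_(a*b*c)) s t :
  has_decomp3 U s -> has_decomp3 V t -> has_decomp3 (U + V) (s + t).
Proof.
move=> [X1 [Y1 [Z1 ->]]] [X2 [Y2 [Z2 ->]]].
exists (fun i => if (i < s)%N then X1 i else X2 (i - s)%N),
       (fun i => if (i < s)%N then Y1 i else Y2 (i - s)%N),
       (fun i => if (i < s)%N then Z1 i else Z2 (i - s)%N).
rewrite big_split_ord /=; congr (_ + _); apply: eq_bigr => i _ /=.
  by rewrite ltn_ord.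
by rewrite ltnNge leq_addr /= addKn.
Qed.

Lemma decomp_exists a b c (U : 'M[F]_(a*b*c)) : exists t, has_decomp3 U t.
Proof.
rewrite [U]matrix_sum_delta.
apply: (big_ind (fun M => exists t, has_decomp3 M t)).
- by exists 0%N; exact: decomp0.
- by move=> M N [t1 h1] [t2 h2]; exists (t1 + t2)%N; exact: decompD.
move=> i _.
apply: (big_ind (fun M => exists t, has_decomp3 M t)).
- by exists 0%N; exact: decomp0.
- by move=> M N [t1 h1] [t2 h2]; exists (t1 + t2)%N; exact: decompD.
move=> j _; exists 1%N.
case: (mxtens_indexP i) => i1 i2; case: (mxtens_indexP j) => j1 j2.
case: (mxtens_indexP i1) => i11 i12; case: (mxtens_indexP j1) => j11 j12.
rewrite delta_tens delta_tens -tensmxZr.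
exact: decomp1.
Qed.

Lemma fchoice (A : Type) (a0 : A) (Pr : nat -> A -> Prop) m :
  (forall k, (k < m)%N -> exists x, Pr k x) ->
  exists f : nat -> A, forall k, (k < m)%N -> Pr k (f k).
Proof.
elim: m => [|m IH] h; first by exists (fun _ => a0).
have [f hf] : exists f : nat -> A, forall k, (k < m)%N -> Pr k (f k).
  by apply: IH => k hk; apply: h; apply: ltnW.
have [x hx] := h m (ltnSn m).
exists (fun k => if k == m then x else f k) => k; rewrite ltnS leq_eqVlt.
by case: eqP => [-> //|_ /= /hf].
Qed.

End Aux.
Section Aux2.
Variable F : fieldType.

Definition Lmap m c (phi : 'M[F]_c -> F) (M : 'M[F]_(m * c)) : 'M[F]_m :=
  \matrix_(i, j) \sum_(k < c) \sum_(l < c)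
     phi (delta_mx k l) * M (mxtens_index (i, k)) (mxtens_index (j, l)).

Lemma LmapD m c phi (M N : 'M[F]_(m * c)) : Lmap phi (M + N) = Lmap phi M + Lmap phi N.
Proof.
apply/matrixP=> i j; rewrite !mxE -big_split; apply: eq_bigr => k _.
by rewrite -big_split; apply: eq_bigr => l _; rewrite mxE mulrDr.
Qed.

Lemma Lmap0 m c phi : Lmap phi (0 : 'M[F]_(m * c)) = 0.
Proof.
apply/matrixP=> i j; rewrite !mxE big1 // => k _; rewrite big1 // => l _.
by rewrite mxE mulr0.
Qed.

Lemma Lmap_sum m c phi (I : Type) (r : seq I) (P : pred I) (G : I -> 'M[F]_(m * c)) :
  Lmap phi (\sum_(i <- r | P i) G i) = \sum_(i <- r | P i) Lmap phi (G i).
Proof. exact: (big_morph _ (@LmapD m c phi) (@Lmap0 m c phi)). Qed.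

Lemma Lmap_tens m c p (X : p.-tuple 'M[F]_c) (o : 'I_p) (A : 'M[F]_m) (B : 'M[F]_c) :
  Lmap (coord X o) (tensmx A B) = coord X o B *: A.
Proof.
apply/matrixP=> i j; rewrite !mxE.
rewrite [in RHS](matrix_sum_delta B) linear_sum /= mulr_suml; apply: eq_bigr => k _.
rewrite linear_sum /= mulr_suml; apply: eq_bigr => l _.
rewrite tensmxE linearZ /=.
by rewrite [LHS]mulrCA [LHS]mulrC [coord _ _ _ * _]mulrC.
Qed.

Lemma reexpand m c t (U : 'M[F]_(m * c)) (P : nat -> 'M[F]_m) (Z : nat -> 'M[F]_c)
    (B : seq 'M[F]_m) :
  U = \sum_(i < t) tensmx (P i) (Z i) ->
  (forall i, (i < t)%N -> P i \in <<B>>%VS) ->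
  exists Z' : nat -> 'M[F]_c, U = \sum_(k < size B) tensmx B`_k (Z' k).
Proof.
move=> -> hP.
pose Zo (k : 'I_(size B)) := \sum_(i < t) coord (in_tuple B) k (P i) *: Z i.
exists (fun k => if insub k is Some o then Zo o else 0).
have -> : \sum_(i < t) tensmx (P i) (Z i) =
     \sum_(i < t) \sum_(k < size B) tensmx B`_k (coord (in_tuple B) k (P i) *: Z i).
  apply: eq_bigr => i _.
  rewrite {1}(@coord_span _ _ _ (in_tuple B) (P i) (hP i (ltn_ord i))) tensmx_suml.
  by apply: eq_bigr => k _; rewrite tensmxZl tensmxZr.
rewrite exchange_big /=; apply: eq_bigr => k _.
by rewrite valK /Zo tensmx_sumr.
Qed.

Lemma extend (vT : vectType F) (P Qs : seq vT) : free Qs ->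
  exists C, [/\ {subset C <= P}, free (Qs ++ C) & {subset P <= <<Qs ++ C>>%VS}].
Proof.
elim: P Qs => [|x P IH] Qs fQ.
  by exists [::]; rewrite cats0; split.
have [xin|xnin] := boolP (x \in <<Qs>>%VS).
  have [C [h1 h2 h3]] := IH Qs fQ.
  exists C; split => //.
    by move=> y /h1 hy; rewrite inE hy orbT.
  move=> y; rewrite inE => /orP [/eqP ->|/h3 //].
  apply: (subvP (sub_span _) _ xin) => z hz; rewrite mem_cat hz //.
have fQx : free (rcons Qs x).
  by rewrite (@perm_free _ _ _ (x :: Qs)) ?free_cons ?xnin // perm_rcons.
have [C [h1 h2 h3]] := IH _ fQx.
exists (x :: C); rewrite -cat_rcons; split => //.
  by move=> y; rewrite inE => /orP [/eqP ->|/h1]; rewrite inE ?eqxx // => ->; rewrite orbT.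
move=> y; rewrite inE => /orP [/eqP ->|/h3 //].
by apply: memv_span; rewrite mem_cat mem_rcons inE eqxx.
Qed.

End Aux2.

Lemma min_exists (D : nat -> Prop) t0 : D t0 ->
  exists s, D s /\ forall t, D t -> (s <= t)%N.
Proof.
elim: t0 {-2}t0 (leqnn t0) => [|m IH] t0 ht0 Dt0.
  by exists t0; split => // t _; move: ht0; rewrite leqn0 => /eqP ->.
case: (Classical_Prop.classic (exists t, (t < t0)%N /\ D t)) => [[t [ht Dt]]|hn].
  by apply: (IH t) => //; rewrite -ltnS (leq_trans ht ht0).
exists t0; split => // t Dt; rewrite leqNgt; apply/negP => ht.
by apply: hn; exists t.
Qed.

Theorem corollary2 (R : realType) (a b c r n : nat)
    (Q : nat -> 'M[R[i]]_(a * b)) (Rm : nat -> 'M[R[i]]_c)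
    (U : 'M[R[i]]_(a * b * c)) :
  U = \sum_(j < r) tensmx (Q j) (Rm j) ->
  free (mkseq Q r) ->
  free (mkseq Rm r) ->
  (n <= r)%N ->
  (forall j, (j < n)%N ->
     exists (X' : 'M[R[i]]_a) (Y' : 'M[R[i]]_b), Q j = tensmx X' Y') ->
  exists (s : nat) (X : nat -> 'M[R[i]]_a) (Y : nat -> 'M[R[i]]_b)
         (Z : nat -> 'M[R[i]]_c),
    [/\ is_schmidt_rank3 U s,
        U = \sum_(i < s) tensmx (tensmx (X i) (Y i)) (Z i),
        (n <= s)%N &
        forall j, (j < n)%N -> tensmx (X j) (Y j) = Q j].
Proof.
move=> hU fQ fR hnr hprod.
have [t0 ht0] := decomp_exists U.
have [s [[X [Y [Z hXYZ]]] hmin]] := min_exists ht0.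
pose P i := tensmx (X i) (Y i).
pose Ps := mkseq P s.
have PinPs : forall i, (i < s)%N -> P i \in Ps.
  by move=> i hi; rewrite /Ps /mkseq map_f // mem_iota.
have hQ : forall j, (j < r)%N -> Q j \in <<Ps>>%VS.
  move=> j hj; pose Rs := in_tuple (mkseq Rm r).
  have hsz : size (mkseq Rm r) = r by rewrite size_mkseq.
  have hjo : (j < size (mkseq Rm r))%N by rewrite hsz.
  pose o : 'I_(size (mkseq Rm r)) := Ordinal hjo.
  have e1 : Lmap (coord Rs o) U = Q j.
    rewrite hU Lmap_sum (bigD1 (Ordinal hj)) //= Lmap_tens.
    have -> : Rm j = Rs`_o by rewrite /= nth_mkseq.
    rewrite coord_free // eqxx scale1r big1 ?addr0 // => k hk.
    rewrite Lmap_tens.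
    have hko : (k < size (mkseq Rm r))%N by rewrite hsz.
    have -> : Rm k = Rs`_(Ordinal hko) by rewrite /= nth_mkseq.
    rewrite coord_free // .
    case: eqP => [[ek]|]; last by rewrite scale0r.
    by move: hk; rewrite -val_eqE /= ek eqxx.
  rewrite -e1 hXYZ Lmap_sum; apply: rpred_sum => i _.
  rewrite Lmap_tens; apply: rpredZ; apply: memv_span; exact: PinPs.
pose Qs := mkseq Q n.
have fQs : free Qs.
  move: fQ; rewrite -(subnKC hnr) /mkseq iotaD map_cat; exact: catl_free.
have [C [hC1 hC2 hC3]] := extend Ps fQs.
pose B := Qs ++ C.
have hPB : forall i, (i < s)%N -> P i \in <<B>>%VS.
  by move=> i hi; apply: hC3; apply: PinPs.
have [Z' hZ'] := reexpand (t:=s) (U:=U) (P:=P) (Z:=Z) hXYZ hPB.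
have hprodB : forall k, (k < size B)%N -> exists x : 'M[R[i]]_a * 'M[R[i]]_b,
    B`_k = tensmx x.1 x.2.
  move=> k hk; rewrite /B nth_cat size_mkseq.
  case: ltnP => hkn.
    by have [X' [Y' e]] := hprod k hkn; exists (X', Y'); rewrite nth_mkseq.
  have : C`_(k - n) \in Ps.
    apply: hC1; apply: mem_nth.
    by rewrite -(ltn_add2l n) subnKC // -(size_mkseq Q n) -size_cat.
  by case/mapP => i _ ->; exists (X i, Y i).
have [f hf] := fchoice (0, 0) hprodB.
have decB : has_decomp3 U (size B).
  exists (fun k => (f k).1), (fun k => (f k).2), Z'.
  by rewrite hZ'; apply: eq_bigr => k _; rewrite (hf k (ltn_ord k)).
have szB : size B = s.
  apply/eqP; rewrite eqn_leq hmin // andbT.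
  rewrite -(eqP hC2); apply: (@leq_trans (\dim <<Ps>>%VS)); last first.
    by rewrite (leq_trans (dim_span Ps)) ?size_mkseq.
  apply: dimvS; apply/span_subvP => v; rewrite mem_cat => /orP [|hv].
    by case/mapP => j; rewrite mem_iota add0n => /andP [_ hj] ->; apply: hQ;
       apply: leq_trans hnr.
  by apply: memv_span; apply: hC1.
exists s, (fun k => (f k).1), (fun k => (f k).2), Z'; split.
- by split => //; exists X, Y, Z.
- by rewrite -szB; rewrite hZ'; apply: eq_bigr => k _; rewrite (hf k (ltn_ord k)).
- by rewrite -szB size_cat size_mkseq leq_addr.
move=> j hj; have hjB : (j < size B)%N by rewrite szB (leq_trans hj) // -szB size_cat size_mkseq leq_addr.
by rewrite -(hf j hjB) /B nth_cat size_mkseq hj nth_mkseq.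
Qed.
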